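(* Let $r>0$, let $\widehat\mu:[0,\infty)\to\mathbb R$ and $\sigma:[0,\infty)\to(0,\infty)$ be globally Lipschitz continuous, and suppose there are constants $\kappa>0$ and $c>0$ such that $x\mapsto\widehat\mu(x)-(r-c)x$ is strictly decreasing on $[\kappa,\infty)$. Let $\widehat\psi\in C^2[0,\infty)$ be the increasing solution of $$\frac{\sigma^2(x)}{2}\widehat\psi''(x)+\widehat\mu(x)\widehat\psi'(x)=r\widehat\psi(x),\qquad\widehat\psi'(0)=1,\ \widehat\psi(0)=0.$$ Then: (I) $\widehat\psi'(x)>0$ for all $x\ge0$. (II) There exists a unique point $b_1\in[\kappa,\infty)$ such that $\widehat\psi''(x)<0$ for $x\in(\kappa,b_1)$ and $\widehat\psi''(x)>0$ for $x\in(b_1,\infty)$. (III) $\dfrac{n}{\widehat\psi(n)}\to0$ as $n\to\infty$. *)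

(* Defs.v *)
From Stdlib Require Import Reals.
From Coquelicot Require Import Coquelicot.
Open Scope R_scope.

Definition lipschitz_nonneg (f : R -> R) : Prop :=
  exists L : R, forall x y, 0 <= x -> 0 <= y -> Rabs (f x - f y) <= L * Rabs (x - y).

Definition deriv_nonneg (f f' : R -> R) : Prop :=
  forall x, 0 <= x ->
    filterlim (fun y => (f y - f x) / (y - x))
      (within (fun y => 0 <= y /\ y <> x) (locally x)) (locally (f' x)).

Definition cont_nonneg (f : R -> R) : Prop :=
  forall x, 0 <= x ->
    filterlim f (within (fun y => 0 <= y) (locally x)) (locally (f x)).

Definition C2_nonneg (f df ddf : R -> R) : Prop :=
  deriv_nonneg f df /\ deriv_nonneg df ddf /\ cont_nonneg ddf.

(* Main.v *)
From Stdlib Require Import Classical.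
From Stdlib Require Import Reals Lra.
From Coquelicot Require Import Coquelicot.
Require Import Defs.
Open Scope R_scope.

Lemma ballR (x e y : R) : ball x e y <-> Rabs (y - x) < e.
Proof. unfold ball; simpl; unfold AbsRing_ball, abs, minus, plus, opp; simpl. tauto. Qed.

Lemma deriv_eps f f' x : deriv_nonneg f f' -> 0 <= x -> forall eps, 0 < eps ->
  exists delta, 0 < delta /\ forall y, 0 <= y -> y <> x -> Rabs (y - x) < delta ->
    Rabs ((f y - f x) / (y - x) - f' x) < eps.
Proof.
  intros Hd hx eps he.
  specialize (Hd x hx (ball (f' x) (mkposreal eps he)) (locally_ball _ _)).
  destruct Hd as [d Hd]. exists d. split. apply cond_pos.
  intros y hy hyx hyd. apply ballR. apply Hd. apply ballR. exact hyd. tauto.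
Qed.

Lemma cont_eps f x : cont_nonneg f -> 0 <= x -> forall eps, 0 < eps ->
  exists delta, 0 < delta /\ forall y, 0 <= y -> Rabs (y - x) < delta ->
    Rabs (f y - f x) < eps.
Proof.
  intros Hd hx eps he.
  specialize (Hd x hx (ball (f x) (mkposreal eps he)) (locally_ball _ _)).
  destruct Hd as [d Hd]. exists d. split. apply cond_pos.
  intros y hy hyd. apply ballR. apply Hd. apply ballR. exact hyd. tauto.
Qed.

Lemma deriv_pos f f' x : deriv_nonneg f f' -> 0 < x -> is_derive f x (f' x).
Proof.
  intros Hd hx. apply is_derive_Reals. intros eps he.
  destruct (deriv_eps f f' x Hd (Rlt_le _ _ hx) eps he) as [d [hd H]].
  assert (hm : 0 < Rmin d x) by (apply Rmin_pos; lra).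
  exists (mkposreal _ hm). intros h hh0 hh. simpl in hh.
  assert (h1 := Rmin_l d x). assert (h2 := Rmin_r d x).
  replace h with ((x + h) - x) at 2 by ring.
  apply H.
  - assert (Rabs h < x) by lra. apply Rabs_def2 in H0. lra.
  - intro E. apply hh0. lra.
  - replace (x + h - x) with h by ring. lra.
Qed.

Lemma cont_of_deriv f f' x : deriv_nonneg f f' -> 0 < x -> continuity_pt f x.
Proof.
  intros Hd hx. apply derivable_continuous_pt. exists (f' x).
  apply is_derive_Reals. now apply deriv_pos.
Qed.

Lemma cont_pos f x : cont_nonneg f -> 0 < x -> continuity_pt f x.
Proof.
  intros Hc hx eps he.
  destruct (cont_eps f x Hc (Rlt_le _ _ hx) eps he) as [d [hd H]].
  exists (Rmin d x). split. apply Rmin_pos; lra.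
  intros y [_ hy]. simpl in hy. unfold R_dist in *. 
  assert (h1 := Rmin_l d x). assert (h2 := Rmin_r d x).
  apply H. apply Rabs_def2 in hy. lra. lra.
Qed.

Lemma cont_of_deriv_nonneg f f' : deriv_nonneg f f' -> cont_nonneg f.
Proof.
  intros Hd x hx P HP.
  destruct HP as [e He].
  destruct (deriv_eps f f' x Hd hx 1 Rlt_0_1) as [d [hd H]].
  set (m := Rmin d (e / (Rabs (f' x) + 1))).
  assert (hpos : 0 < e / (Rabs (f' x) + 1)).
  { apply Rdiv_lt_0_compat. apply cond_pos. pose proof (Rabs_pos (f' x)); lra. }
  assert (hm : 0 < m) by (apply Rmin_pos; lra).
  exists (mkposreal m hm). intros y hy1 hy0.
  assert (hy : Rabs (y - x) < m) by (apply ballR; exact hy1). clear hy1.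
  apply He. apply ballR.
  destruct (Req_dec y x) as [E|E]. subst. rewrite Rminus_eq_0, Rabs_R0. apply cond_pos.
  assert (hyd : Rabs (y - x) < d).
  { unfold m in hy. pose proof (Rmin_l d (e / (Rabs (f' x) + 1))). lra. }
  assert (hq := H y hy0 E hyd).
  assert (Rabs ((f y - f x) / (y - x)) < Rabs (f' x) + 1).
  { pose proof (Rabs_triang_inv ((f y - f x) / (y - x)) (f' x)). lra. }
  unfold Rdiv in H0. rewrite Rabs_mult, Rabs_inv in H0.
  assert (hyx : 0 < Rabs (y - x)) by (apply Rabs_pos_lt; lra).
  assert (hmr : Rabs (y - x) < e / (Rabs (f' x) + 1)).
  { pose proof (Rmin_r d (e / (Rabs (f' x) + 1))). unfold m in hy. lra. }
  assert (Rabs (f y - f x) < (Rabs (f' x) + 1) * Rabs (y - x)).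
  { apply (Rmult_lt_compat_r (Rabs (y - x))) in H0; auto.
    rewrite Rmult_assoc, Rinv_l in H0. lra. lra. }
  apply Rlt_le_trans with ((Rabs (f' x) + 1) * Rabs (y - x)). exact H1.
  pose proof (Rabs_pos (f' x)).
  apply (Rmult_lt_compat_l (Rabs (f' x) + 1)) in hmr; [|lra].
  unfold Rdiv in hmr. rewrite <- Rmult_assoc, (Rmult_comm _ e), Rmult_assoc, Rinv_r in hmr; lra.
Qed.

Lemma mvt f f' a b : a <= b -> (forall x, a <= x <= b -> is_derive f x (f' x)) ->
  exists c, a <= c <= b /\ f b - f a = f' c * (b - a).
Proof.
  intros hab Hd.
  destruct (MVT_gen f a b f') as [c [hc E]].
  - intros x hx. rewrite Rmin_left, Rmax_right in hx by lra. apply Hd; lra.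
  - intros x hx. rewrite Rmin_left, Rmax_right in hx by lra.
    apply derivable_continuous_pt. exists (f' x). apply is_derive_Reals. apply Hd; lra.
  - rewrite Rmin_left, Rmax_right in hc by lra. exists c. split; auto.
Qed.

Lemma mono_w f f' a b : a <= b -> (forall x, a <= x <= b -> is_derive f x (f' x)) ->
  (forall x, a <= x <= b -> 0 <= f' x) -> f a <= f b.
Proof.
  intros hab Hd Hp. destruct (mvt f f' a b hab Hd) as [c [hc E]].
  assert (0 <= f' c * (b - a)) by (apply Rmult_le_pos; [apply Hp; lra| lra]). lra.
Qed.

Lemma mono_s f f' a b : a < b -> (forall x, a <= x <= b -> is_derive f x (f' x)) ->
  (forall x, a <= x <= b -> 0 < f' x) -> f a < f b.
Proof.
  intros hab Hd Hp. destruct (mvt f f' a b (Rlt_le _ _ hab) Hd) as [c [hc E]].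
  assert (0 < f' c * (b - a)) by (apply Rmult_lt_0_compat; [apply Hp; lra| lra]). lra.
Qed.

Lemma cont_nbhd g z : continuity_pt g z -> g z <> 0 ->
  exists d, 0 < d /\ forall x, Rabs (x - z) < d -> Rabs (g x - g z) < Rabs (g z).
Proof.
  intros Hc hz. destruct (Hc (Rabs (g z)) (Rabs_pos_lt _ hz)) as [d [hd H]].
  exists d. split; auto. intros x hx. destruct (Req_dec x z) as [E|E].
  - subst. rewrite Rminus_eq_0, Rabs_R0. apply Rabs_pos_lt; auto.
  - apply H. split. split. exact I. auto. exact hx.
Qed.

Lemma first_zero g a b : a <= b -> (forall x, a <= x <= b -> continuity_pt g x) ->
  0 < g a -> g b <= 0 ->
  exists z, a < z <= b /\ g z = 0 /\ forall y, a <= y < z -> 0 < g y.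
Proof.
  intros hab Hc ha hb.
  set (E := fun x => a <= x <= b /\ forall y, a <= y <= x -> 0 < g y).
  assert (hbd : bound E) by (exists b; intros x [hx _]; lra).
  assert (hne : exists x, E x) by (exists a; split; [lra| intros y hy; replace y with a by lra; auto]).
  destruct (completeness E hbd hne) as [z [hub hlub]].
  assert (haz : a <= z) by (apply hub; unfold E; split; [lra| intros y hy; replace y with a by lra; auto]).
  assert (hzb : z <= b) by (apply hlub; intros x [hx _]; lra).
  assert (Hbelow : forall y, a <= y < z -> 0 < g y).
  { intros y hy. destruct (Rlt_dec 0 (g y)) as [h|h]; auto. exfalso.
    assert (z <= y); [|lra]. apply hlub. intros x [hx Hx].
    destruct (Rle_lt_dec x y) as [h1|h1]; auto. exfalso. apply h. apply Hx. lra. }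
  assert (hgz : g z = 0).
  { destruct (Rtotal_order (g z) 0) as [h|[h|h]]; auto; exfalso.
    - destruct (cont_nbhd g z (Hc z ltac:(lra)) ltac:(lra)) as [d [hd H]].
      assert (hza : a < z).
      { destruct (Req_dec a z) as [E'|E']; [subst; lra| lra]. }
      set (y := Rmax a (z - d/2)).
      assert (hy1 : a <= y) by apply Rmax_l.
      assert (hy2 : y < z) by (apply Rmax_lub_lt; lra).
      assert (hy3 : z - d/2 <= y) by apply Rmax_r.
      assert (Hy := Hbelow y ltac:(lra)).
      assert (Rabs (y - z) < d) by (apply Rabs_def1; lra).
      specialize (H y H0). rewrite (Rabs_left (g z)) in H by lra.
      apply Rabs_def2 in H. lra.
    - destruct (cont_nbhd g z (Hc z ltac:(lra)) ltac:(lra)) as [d [hd H]].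
      assert (hzb' : z < b) by (destruct (Req_dec z b); [subst; lra| lra]).
      set (y := Rmin b (z + d/2)).
      assert (hy1 : y <= b) by apply Rmin_l.
      assert (hy2 : z < y) by (apply Rmin_glb_lt; lra).
      assert (hy3 : y <= z + d/2) by apply Rmin_r.
      assert (E y); [|assert (y <= z) by (apply hub; auto); lra].
      split; [lra|]. intros t ht. destruct (Rlt_le_dec t z) as [h1|h1].
      + apply Hbelow; lra.
      + assert (Rabs (t - z) < d) by (apply Rabs_def1; lra).
        specialize (H t H0). rewrite (Rabs_right (g z)) in H by lra.
        apply Rabs_def2 in H. lra. }
  exists z. split; [|split; auto].
  split; auto. destruct (Req_dec a z); [subst; lra| lra].
Qed.

Lemma prod_ub a b e : Rabs b <= e -> a * b <= Rabs a * e.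
Proof.
  intros h. apply Rle_trans with (Rabs (a * b)). apply Rle_abs.
  rewrite Rabs_mult. apply Rmult_le_compat_l. apply Rabs_pos. exact h.
Qed.

Lemma keyB r c p e q1 q2 m t : 0 < r -> Rabs (q1 - p) < e -> Rabs q2 < e -> Rabs t <= 1 ->
  e * (r + Rabs (r - c) + Rabs m) <= c * p / 2 -> 0 < c * p ->
  0 < r * q1 - m * q2 - (r - c) * p - (r - c) * q2 * t.
Proof.
  intros hr h1 h2 ht hK hcp.
  apply Rabs_def2 in h1. destruct h1 as [h1 h1'].
  assert (a1 : r * (p - e) < r * q1) by (apply Rmult_lt_compat_l; lra).
  assert (a2 : m * q2 <= Rabs m * e) by (apply prod_ub; lra).
  assert (a3 : Rabs (q2 * t) <= e).
  { rewrite Rabs_mult. apply Rle_trans with (Rabs q2 * 1).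
    apply Rmult_le_compat_l. apply Rabs_pos. auto. lra. }
  assert (a4 : (r - c) * (q2 * t) <= Rabs (r - c) * e) by (apply prod_ub; auto).
  rewrite Rmult_assoc. lra.
Qed.

Theorem lemmaA1 (r : R) (mu sigma : R -> R) (kappa c : R)
  (psi dpsi ddpsi : R -> R)
  (hr : 0 < r)
  (hmu : lipschitz_nonneg mu)
  (hsig : lipschitz_nonneg sigma)
  (hsigpos : forall x, 0 <= x -> 0 < sigma x)
  (hkappa : 0 < kappa) (hc : 0 < c)
  (hdec : forall x y, kappa <= x -> x < y ->
            mu y - (r - c) * y < mu x - (r - c) * x)
  (hC2 : C2_nonneg psi dpsi ddpsi)
  (hode : forall x, 0 <= x ->
            (sigma x ^ 2 / 2) * ddpsi x + mu x * dpsi x = r * psi x)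
  (hd0 : dpsi 0 = 1) (h0 : psi 0 = 0) :
  (forall x, 0 <= x -> 0 < dpsi x) /\
  (exists! b1 : R, kappa <= b1 /\
     (forall x, kappa < x < b1 -> ddpsi x < 0) /\
     (forall x, b1 < x -> 0 < ddpsi x)) /\
  is_lim_seq (fun n : nat => INR n / psi (INR n)) 0.
Proof.
  destruct hC2 as [Hd1 [Hd2 Hc2]].
  assert (Dpsi : forall x, 0 < x -> is_derive psi x (dpsi x)) by (intros; now apply deriv_pos).
  assert (Ddpsi : forall x, 0 < x -> is_derive dpsi x (ddpsi x)) by (intros; now apply deriv_pos).
  assert (C0psi := cont_of_deriv_nonneg _ _ Hd1).
  assert (C0dpsi := cont_of_deriv_nonneg _ _ Hd2).
  assert (Paux : forall z, 0 < z -> (forall t, 0 < t <= z -> 0 <= dpsi t) ->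
            (forall t, 0 < t < z -> 0 < dpsi t) -> 0 < psi z).
  { intros z hz Hw Hs.
    assert (q1 : 0 <= psi (z/4)).
    { destruct (Rle_lt_dec 0 (psi (z/4))) as [h|h]; auto. exfalso.
      destruct (cont_eps psi 0 C0psi (Rle_refl 0) (- psi (z/4)) ltac:(lra)) as [d [hd H]].
      set (y := Rmin (d/2) (z/4)).
      assert (y1 : y <= d/2) by apply Rmin_l. assert (y2 : y <= z/4) by apply Rmin_r.
      assert (y3 : 0 < y) by (apply Rmin_pos; lra).
      assert (Hy : Rabs (psi y - psi 0) < - psi (z/4)) by (apply H; [lra| rewrite Rminus_0_r, Rabs_right; lra]).
      rewrite h0, Rminus_0_r in Hy. apply Rabs_def2 in Hy.
      assert (psi y <= psi (z/4)).
      { apply (mono_w psi dpsi); auto. intros; apply Dpsi; lra. intros; apply Hw; lra. }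
      lra. }
    assert (q2 : psi (z/4) < psi (z/2)).
    { apply (mono_s psi dpsi). lra. intros; apply Dpsi; lra. intros; apply Hs; lra. }
    assert (q3 : psi (z/2) <= psi z).
    { apply (mono_w psi dpsi). lra. intros; apply Dpsi; lra. intros; apply Hw; lra. }
    lra. }
  assert (HI : forall x, 0 <= x -> 0 < dpsi x).
  { intros x1 hx1. destruct (Rlt_dec 0 (dpsi x1)) as [h|h]; auto. exfalso.
    assert (hx1' : 0 < x1) by (destruct (Req_dec x1 0); [subst; lra| lra]).
    destruct (cont_eps dpsi 0 C0dpsi (Rle_refl 0) (1/2) ltac:(lra)) as [d [hd H]].
    rewrite hd0 in H.
    assert (Hsmall : forall t, 0 <= t < d -> 0 < dpsi t).
    { intros t ht. assert (Rabs (dpsi t - 1) < 1/2) by (apply H; [lra| rewrite Rminus_0_r, Rabs_right; lra]).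
      apply Rabs_def2 in H0. lra. }
    set (a := Rmin (d/2) x1).
    assert (a1 : a <= d/2) by apply Rmin_l. assert (a2 : a <= x1) by apply Rmin_r.
    assert (a3 : 0 < a) by (apply Rmin_pos; lra).
    destruct (first_zero dpsi a x1 a2) as [z [hz [hdz Hz]]].
    { intros x hx. apply (cont_of_deriv _ _ _ Hd2). lra. }
    { apply Hsmall; lra. }
    { lra. }
    assert (Hpos : forall t, 0 <= t < z -> 0 < dpsi t).
    { intros t ht. destruct (Rlt_le_dec t a). apply Hsmall; lra. apply Hz; lra. }
    assert (hpz : 0 < psi z).
    { apply Paux. lra. intros t ht. destruct (Req_dec t z). subst; lra. left; apply Hpos; lra.
      intros t ht; apply Hpos; lra. }
    assert (hddz : 0 < ddpsi z).
    { specialize (hode z ltac:(lra)). rewrite hdz, Rmult_0_r, Rplus_0_r in hode.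
      assert (hs := hsigpos z ltac:(lra)).
      assert (0 < sigma z ^ 2 / 2) by (simpl; nra).
      destruct (Rlt_le_dec 0 (ddpsi z)) as [h'|h']; auto.
      assert (sigma z ^ 2 / 2 * ddpsi z <= 0) by nra. nra. }
    destruct (deriv_eps dpsi ddpsi z Hd2 ltac:(lra) (ddpsi z / 2) ltac:(lra)) as [d' [hd' H']].
    set (y := Rmax (z - d'/2) (z/2)).
    assert (y1 : z - d'/2 <= y) by apply Rmax_l. assert (y2 : z/2 <= y) by apply Rmax_r.
    assert (y3 : y < z) by (apply Rmax_lub_lt; lra).
    assert (Hq := H' y ltac:(lra) ltac:(lra) ltac:(rewrite Rabs_left; lra)).
    rewrite hdz, Rminus_0_r in Hq. apply Rabs_def2 in Hq.
    assert (dpsi y / (y - z) < 0).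
    { assert (0 < dpsi y / (z - y)) by (apply Rdiv_lt_0_compat; [apply Hpos; lra| lra]).
      replace (dpsi y / (y - z)) with (- (dpsi y / (z - y))) by (field; lra). lra. }
    lra. }
  assert (Ppos : forall x, 0 < x -> 0 < psi x).
  { intros x hx. apply Paux; auto; intros t ht; [left|]; apply HI; lra. }
  assert (Hg : forall x, 0 <= x -> ddpsi x = (r * psi x - mu x * dpsi x) * (2 / sigma x ^ 2)).
  { intros x hx. rewrite <- (hode x hx). assert (hs := hsigpos x hx). field. lra. }
  assert (S2 : forall x, 0 <= x -> 0 < 2 / sigma x ^ 2).
  { intros x hx. assert (hs := hsigpos x hx). apply Rdiv_lt_0_compat. lra. simpl; nra. }
  assert (SgP : forall x, 0 <= x -> 0 < r * psi x - mu x * dpsi x -> 0 < ddpsi x).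
  { intros x hx h. rewrite Hg by auto. apply Rmult_lt_0_compat; auto. }
  assert (SgN : forall x, 0 <= x -> r * psi x - mu x * dpsi x < 0 -> ddpsi x < 0).
  { intros x hx h. rewrite Hg by auto. assert (S := S2 x hx). nra. }
  assert (Gz : forall z, 0 <= z -> ddpsi z = 0 -> r * psi z = mu z * dpsi z).
  { intros z hz h. specialize (hode z hz). rewrite h, Rmult_0_r, Rplus_0_l in hode. lra. }
  assert (Loc : forall z, kappa <= z -> ddpsi z = 0 -> exists d, 0 < d /\
             (forall y, z < y < z + d -> 0 < ddpsi y) /\
             (kappa < z -> forall y, z - d < y < z -> ddpsi y < 0)).
  { intros z hz hdz. assert (hp := HI z ltac:(lra)). set (p := dpsi z) in *.
    set (K := r + Rabs (r - c) + Rabs (mu z)).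
    assert (hK : 0 < K) by (unfold K; pose proof (Rabs_pos (r - c)); pose proof (Rabs_pos (mu z)); lra).
    set (e := c * p / 2 / K).
    assert (he : 0 < e) by (unfold e; apply Rdiv_lt_0_compat; [nra|lra]).
    assert (heK : e * K <= c * p / 2) by (unfold e; right; field; lra).
    assert (hcp : 0 < c * p) by nra.
    destruct (deriv_eps psi dpsi z Hd1 ltac:(lra) e he) as [d1 [hd1 H1]].
    destruct (deriv_eps dpsi ddpsi z Hd2 ltac:(lra) e he) as [d2 [hd2 H2]].
    rewrite hdz in H2. assert (gz := Gz z ltac:(lra) hdz). change (dpsi z) with p in gz.
    set (d := Rmin (Rmin d1 d2) (Rmin 1 (if Rlt_dec kappa z then z - kappa else 1))).
    assert (hd : 0 < d).
    { unfold d. destruct (Rlt_dec kappa z); repeat apply Rmin_pos; lra. }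
    assert (e1 : d <= d1) by (unfold d; pose proof (Rmin_l (Rmin d1 d2) (Rmin 1 (if Rlt_dec kappa z then z - kappa else 1))); pose proof (Rmin_l d1 d2); lra).
    assert (e2 : d <= d2) by (unfold d; pose proof (Rmin_l (Rmin d1 d2) (Rmin 1 (if Rlt_dec kappa z then z - kappa else 1))); pose proof (Rmin_r d1 d2); lra).
    assert (e3 : d <= Rmin 1 (if Rlt_dec kappa z then z - kappa else 1)) by (unfold d; apply Rmin_r).
    assert (e4 : d <= 1) by (pose proof (Rmin_l 1 (if Rlt_dec kappa z then z - kappa else 1)); lra).
    assert (e5 : kappa < z -> d <= z - kappa).
    { intro hk. pose proof (Rmin_r 1 (if Rlt_dec kappa z then z - kappa else 1)).
      destruct (Rlt_dec kappa z); [lra|contradiction]. }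
    exists d. split; auto. split.
    - intros y hy. apply SgP. lra.
      assert (hyz : y <> z) by lra.
      assert (Q1 := H1 y ltac:(lra) hyz ltac:(rewrite Rabs_right; lra)).
      assert (Q2 := H2 y ltac:(lra) hyz ltac:(rewrite Rabs_right; lra)).
      rewrite Rminus_0_r in Q2.
      set (q1 := (psi y - psi z) / (y - z)) in *.
      set (q2 := (dpsi y - p) / (y - z)) in *.
      set (dd := y - z).
      assert (E1 : psi y = psi z + q1 * dd) by (unfold q1, dd; field; lra).
      assert (E2 : dpsi y = p + q2 * dd) by (unfold q2, dd, p; field; lra).
      assert (hmu1 : mu y < mu z + (r - c) * dd) by (specialize (hdec z y hz ltac:(lra)); unfold dd; lra).
      assert (hpy := HI y ltac:(lra)).
      assert (A1 : mu y * dpsi y < (mu z + (r - c) * dd) * dpsi y) by (apply Rmult_lt_compat_r; auto).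
      assert (B := keyB r c p e q1 q2 (mu z) dd hr Q1 Q2 ltac:(rewrite Rabs_right; unfold dd; lra) heK hcp).
      assert (0 < dd * (r * q1 - mu z * q2 - (r - c) * p - (r - c) * q2 * dd)) by (apply Rmult_lt_0_compat; [unfold dd; lra | exact B]).
      assert (A2 : (mu z + (r - c) * dd) * dpsi y = (mu z + (r - c) * dd) * (p + q2 * dd)) by (rewrite E2; ring).
      rewrite E1. nra.
    - intros hk y hy. apply SgN. assert (d <= z - kappa) by auto. lra.
      assert (hyz : y <> z) by lra.
      assert (Q1 := H1 y ltac:(assert (d <= z - kappa) by auto; lra) hyz ltac:(rewrite Rabs_left; lra)).
      assert (Q2 := H2 y ltac:(assert (d <= z - kappa) by auto; lra) hyz ltac:(rewrite Rabs_left; lra)).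
      rewrite Rminus_0_r in Q2.
      set (q1 := (psi y - psi z) / (y - z)) in *.
      set (q2 := (dpsi y - p) / (y - z)) in *.
      set (dd := z - y).
      assert (E1 : psi y = psi z - q1 * dd) by (unfold q1, dd; field; lra).
      assert (E2 : dpsi y = p - q2 * dd) by (unfold q2, dd, p; field; lra).
      assert (hmu1 : mu z - (r - c) * dd < mu y).
      { assert (d <= z - kappa) by auto. specialize (hdec y z ltac:(lra) ltac:(lra)); unfold dd; lra. }
      assert (hpy := HI y ltac:(assert (d <= z - kappa) by auto; lra)).
      assert (A1 : (mu z - (r - c) * dd) * dpsi y < mu y * dpsi y) by (apply Rmult_lt_compat_r; auto).
      assert (B := keyB r c p e q1 q2 (mu z) (- dd) hr Q1 Q2 ltac:(rewrite Rabs_left; unfold dd; lra) heK hcp).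
      assert (0 < dd * (r * q1 - mu z * q2 - (r - c) * p - (r - c) * q2 * - dd)) by (apply Rmult_lt_0_compat; [unfold dd; lra | exact B]).
      assert (A2 : (mu z - (r - c) * dd) * dpsi y = (mu z - (r - c) * dd) * (p - q2 * dd)) by (rewrite E2; ring).
      rewrite E1. nra. }
  assert (Prop_a : forall a, kappa <= a -> 0 <= ddpsi a -> forall x, a < x -> 0 < ddpsi x).
  { intros a ha hda y hy. destruct (Rlt_dec 0 (ddpsi y)) as [h|h]; auto. exfalso.
    assert (Ha' : exists a', a < a' < y /\ 0 < ddpsi a').
    { destruct (Req_dec (ddpsi a) 0) as [E|E].
      - destruct (Loc a ha E) as [d [hd [HR _]]]. exists (Rmin (a + d/2) ((a+y)/2)).
        pose proof (Rmin_l (a + d/2) ((a+y)/2)). pose proof (Rmin_r (a + d/2) ((a+y)/2)).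
        assert (a < Rmin (a + d/2) ((a+y)/2)) by (apply Rmin_glb_lt; lra).
        split. lra. apply HR. lra.
      - destruct (cont_nbhd ddpsi a (cont_pos ddpsi a Hc2 ltac:(lra)) E) as [d [hd H]].
        exists (Rmin (a + d/2) ((a+y)/2)).
        pose proof (Rmin_l (a + d/2) ((a+y)/2)). pose proof (Rmin_r (a + d/2) ((a+y)/2)).
        assert (a < Rmin (a + d/2) ((a+y)/2)) by (apply Rmin_glb_lt; lra).
        split. lra.
        assert (Q := H (Rmin (a + d/2) ((a+y)/2)) ltac:(rewrite Rabs_right; lra)).
        rewrite (Rabs_right (ddpsi a)) in Q by lra. apply Rabs_def2 in Q. lra. }
    destruct Ha' as [a' [ha' hda']].
    destruct (first_zero ddpsi a' y) as [z [hz [hdz Hz]]].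
    { lra. }
    { intros x hx. apply cont_pos; auto; lra. }
    { auto. }
    { lra. }
    destruct (Loc z ltac:(lra) hdz) as [d [hd [_ HL]]].
    specialize (HL ltac:(lra)).
    set (t := Rmax a' (z - d/2)).
    assert (t1 : a' <= t) by apply Rmax_l. assert (t2 : z - d/2 <= t) by apply Rmax_r.
    assert (t3 : t < z) by (apply Rmax_lub_lt; lra).
    assert (Q1 := Hz t ltac:(lra)). assert (Q2 := HL t ltac:(lra)). lra. }
  assert (Hne : exists x1, kappa <= x1 /\ 0 <= ddpsi x1).
  { apply NNPP. intro Hn.
    assert (Hneg : forall t, kappa <= t -> ddpsi t < 0).
    { intros t ht. destruct (Rle_lt_dec 0 (ddpsi t)) as [h|h]; auto. exfalso. apply Hn. exists t; auto. }
    set (x := kappa + Rabs (mu kappa) / c + 1).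
    assert (hx : kappa + 1 <= x).
    { unfold x. assert (0 <= Rabs (mu kappa) / c) by (apply Rdiv_le_0_compat; [apply Rabs_pos| lra]). lra. }
    assert (hcx : c * (x - kappa) = Rabs (mu kappa) + c) by (unfold x; field; lra).
    destruct (mvt psi dpsi kappa x ltac:(lra)) as [xi [hxi Exi]].
    { intros; apply Dpsi; lra. }
    assert (hdxi : dpsi x <= dpsi xi).
    { destruct (mvt dpsi ddpsi xi x ltac:(lra)) as [eta [heta Eeta]].
      { intros; apply Ddpsi; lra. }
      assert (ddpsi eta < 0) by (apply Hneg; lra).
      assert (ddpsi eta * (x - xi) <= 0) by nra. lra. }
    assert (hpx := HI x ltac:(lra)).
    assert (hmx : mu x < mu kappa + (r - c) * (x - kappa)) by (specialize (hdec kappa x ltac:(lra) ltac:(lra)); lra).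
    assert (A1 : mu x * dpsi x < (mu kappa + (r - c) * (x - kappa)) * dpsi x) by (apply Rmult_lt_compat_r; auto).
    assert (A2 : dpsi x * (x - kappa) <= dpsi xi * (x - kappa)) by (apply Rmult_le_compat_r; lra).
    assert (hpk := Ppos kappa hkappa).
    assert (A3 : mu kappa <= Rabs (mu kappa)) by apply Rle_abs.
    assert (A4 : 0 < dpsi x * (c * (x - kappa) - mu kappa)) by (apply Rmult_lt_0_compat; lra).
    assert (0 < ddpsi x).
    { apply SgP. lra. nra. }
    assert (ddpsi x < 0) by (apply Hneg; lra). lra. }
  set (PB := fun b1 => kappa <= b1 /\
     (forall x, kappa < x < b1 -> ddpsi x < 0) /\
     (forall x, b1 < x -> 0 < ddpsi x)).
  assert (Huniq : forall b b', PB b -> PB b' -> b = b').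
  { assert (W : forall b b', PB b -> PB b' -> b < b' -> False).
    { intros b b' [h1 [h2 h3]] [h1' [h2' h3']] hl.
      assert (0 < ddpsi ((b + b')/2)) by (apply h3; lra).
      assert (ddpsi ((b + b')/2) < 0) by (apply h2'; lra). lra. }
    intros b b' H H'. destruct (Rtotal_order b b') as [h|[h|h]]; auto.
    exfalso; apply (W b b'); auto. exfalso; apply (W b' b); auto. }
  assert (Hex : exists b, PB b).
  { destruct (Rle_lt_dec 0 (ddpsi kappa)) as [h|h].
    - exists kappa. split. lra. split. intros; lra. apply Prop_a; lra.
    - destruct Hne as [x1 [hx1 hdx1]].
      destruct (first_zero (fun t => - ddpsi t) kappa x1 hx1) as [z [hz [hdz Hz]]].
      { intros x hx. apply continuity_pt_opp. apply cont_pos; auto; lra. }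
      { lra. }
      { lra. }
      exists z. split. lra. split.
      + intros x hx. assert (0 < - ddpsi x) by (apply Hz; lra). lra.
      + apply Prop_a. lra. lra. }
  split; [exact HI|]. split.
  { destruct Hex as [b Hb]. exists b. split; [exact Hb|]. intros b' Hb'. apply Huniq; auto. }
  destruct Hex as [b1 [hb1 [_ Hpos2]]].
  set (x1 := b1 + 1).
  assert (Hinc : forall s t, x1 <= s <= t -> dpsi s <= dpsi t).
  { intros s t hst. destruct (mvt dpsi ddpsi s t ltac:(lra)) as [eta [heta Eeta]].
    { intros; apply Ddpsi; unfold x1 in *; lra. }
    assert (0 < ddpsi eta) by (apply Hpos2; unfold x1 in *; lra).
    assert (0 <= ddpsi eta * (t - s)) by (apply Rmult_le_pos; lra). lra. }
  assert (hx1k : kappa < x1) by (unfold x1; lra).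
  destruct hsig as [Ls HLs].
  set (Sg := Rabs (sigma 0) + Rabs Ls).
  assert (Sb : forall x, 1 <= x -> sigma x <= Sg * x).
  { intros x hx. specialize (HLs x 0 ltac:(lra) ltac:(lra)).
    rewrite Rminus_0_r, (Rabs_right x) in HLs by lra.
    assert (a1 := Rle_abs (sigma x - sigma 0)).
    assert (a2 := Rle_abs (sigma 0)).
    assert (a3 : Ls * x <= Rabs Ls * x) by (apply Rmult_le_compat_r; [lra| apply Rle_abs]).
    assert (a4 : Rabs (sigma 0) <= Rabs (sigma 0) * x) by (pose proof (Rabs_pos (sigma 0)); nra).
    unfold Sg. lra. }
  assert (hS : 0 < Sg) by (assert (h1 := Sb 1 (Rle_refl 1)); assert (h2 := hsigpos 1 ltac:(lra)); lra).
  assert (Unb : forall M, exists X, x1 <= X /\ M <= dpsi X).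
  { intro M. apply NNPP. intro Hn.
    assert (Hlt : forall X, x1 <= X -> dpsi X < M).
    { intros X hX. destruct (Rlt_le_dec (dpsi X) M) as [h|h]; auto. exfalso; apply Hn; exists X; auto. }
    set (E := fun y => exists x, x1 <= x /\ y = dpsi x).
    destruct (completeness E) as [L [hub hlub]].
    { exists M. intros y [x [hx ->]]. left; apply Hlt; auto. }
    { exists (dpsi x1). exists x1. split; auto; lra. }
    assert (HL1 : forall x, x1 <= x -> dpsi x <= L) by (intros x hx; apply hub; exists x; auto).
    assert (hL0 : 0 < L) by (assert (h1 := HL1 x1 (Rle_refl _)); assert (h2 := HI x1 ltac:(lra)); lra).
    set (K := r + Rabs (r - c)).
    assert (hK : 0 < K) by (unfold K; pose proof (Rabs_pos (r - c)); lra).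
    set (e := c * L / 2 / K).
    assert (he : 0 < e) by (unfold e; apply Rdiv_lt_0_compat; [nra|lra]).
    assert (eK : e * K = c * L / 2) by (unfold e; field; lra).
    assert (Ht : exists t, x1 <= t /\ L - e < dpsi t).
    { apply NNPP. intro Hn2.
      assert (L <= L - e); [|lra]. apply hlub. intros y [x [hx ->]].
      destruct (Rle_lt_dec (dpsi x) (L - e)) as [h|h]; auto. exfalso; apply Hn2; exists x; auto. }
    destruct Ht as [t [ht hdt]].
    set (C0 := r * psi t - r * (L - e) * t - Rabs (mu x1) * L + (r - c) * x1 * L + Rabs (r - c) * x1 * e).
    assert (Glow : forall x, t < x -> c * L / 2 * x + C0 < r * psi x - mu x * dpsi x).
    { intros x hx.
      destruct (mvt psi dpsi t x ltac:(lra)) as [xi [hxi Exi]].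
      { intros; apply Dpsi; unfold x1 in *; lra. }
      assert (hxi2 : dpsi t <= dpsi xi) by (apply Hinc; lra).
      assert (F1 : (L - e) * (x - t) <= dpsi xi * (x - t)) by (apply Rmult_le_compat_r; lra).
      assert (hpx := HI x ltac:(unfold x1 in *; lra)).
      assert (hLx := HL1 x ltac:(lra)).
      assert (hdx : L - e < dpsi x) by (assert (dpsi t <= dpsi x) by (apply Hinc; lra); lra).
      assert (hmx : mu x < mu x1 + (r - c) * (x - x1)) by (specialize (hdec x1 x ltac:(lra) ltac:(lra)); lra).
      assert (A1 : mu x * dpsi x < (mu x1 + (r - c) * (x - x1)) * dpsi x) by (apply Rmult_lt_compat_r; auto).
      assert (A2 : mu x1 * dpsi x <= Rabs (mu x1) * L) by (apply prod_ub; rewrite Rabs_right; lra).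
      assert (A3 : (r - c) * ((x - x1) * (dpsi x - L)) <= Rabs (r - c) * ((x - x1) * e)).
      { apply prod_ub. rewrite Rabs_mult, (Rabs_right (x - x1)) by lra.
        apply Rmult_le_compat_l. lra. apply Rabs_le. lra. }
      assert (A4 : x * (e * K) = x * (c * L / 2)) by (rewrite eK; ring).
      unfold K in A4. unfold C0. nra. }
    set (X0 := Rmax (Rmax (t + 1) 1) (- 4 * C0 / (c * L))).
    assert (X01 : t + 1 <= X0) by (unfold X0; eapply Rle_trans; [apply Rmax_l| apply Rmax_l]).
    assert (X02 : 1 <= X0) by (unfold X0; eapply Rle_trans; [apply Rmax_r| apply Rmax_l]).
    assert (X03 : - 4 * C0 / (c * L) <= X0) by (unfold X0; apply Rmax_r).
    assert (hcL : 0 < c * L) by nra.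
    set (k := c * L / (2 * Sg ^ 2)).
    assert (hk : 0 < k) by (unfold k; apply Rdiv_lt_0_compat; [lra| simpl; nra]).
    assert (Hdd : forall x, X0 <= x -> k <= ddpsi x * x).
    { intros x hx.
      assert (G1 := Glow x ltac:(lra)).
      assert (G2 : - C0 <= c * L / 4 * x).
      { assert (c * L / 4 * (- 4 * C0 / (c * L)) <= c * L / 4 * x) by (apply Rmult_le_compat_l; lra).
        replace (c * L / 4 * (- 4 * C0 / (c * L))) with (- C0) in H by (field; lra). lra. }
      assert (G3 : c * L / 4 * x < sigma x ^ 2 / 2 * ddpsi x) by (assert (HO := hode x ltac:(lra)); lra).
      assert (hs := hsigpos x ltac:(lra)). assert (hsb := Sb x ltac:(lra)).
      assert (hdpos : 0 < ddpsi x) by (apply Hpos2; unfold x1 in *; lra).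
      assert (G4 : sigma x ^ 2 <= (Sg * x) ^ 2) by (simpl; nra).
      assert (G5 : c * L / 4 * x < (Sg * x) ^ 2 / 2 * ddpsi x) by nra.
      assert (G6 : c * L / 4 < Sg ^ 2 / 2 * (ddpsi x * x)).
      { apply (Rmult_lt_reg_r x). lra. replace (Sg ^ 2 / 2 * (ddpsi x * x) * x) with ((Sg * x) ^ 2 / 2 * ddpsi x) by field. lra. }
      unfold k. apply Rlt_le. apply (Rmult_lt_reg_l (Sg ^ 2 / 2)). simpl; nra.
      replace (Sg ^ 2 / 2 * (c * L / (2 * Sg ^ 2))) with (c * L / 4) by (field; lra). lra. }
    set (A := (L - dpsi X0) / k + 1).
    assert (hA : 1 <= A) by (assert (hh := HL1 X0 ltac:(lra)); unfold A; assert (0 <= (L - dpsi X0) / k) by (apply Rdiv_le_0_compat; lra); lra).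
    set (x := X0 * exp A).
    assert (hxe : 1 <= exp A) by (assert (h := exp_ineq1_le A); lra).
    assert (hx : X0 <= x) by (unfold x; nra).
    assert (Hm : dpsi X0 - k * ln X0 <= dpsi x - k * ln x).
    { apply (mono_w (fun s => dpsi s - k * ln s) (fun s => ddpsi s - k * / s)). lra.
      - intros s hs. apply (is_derive_minus dpsi (fun s => k * ln s)).
        apply Ddpsi. lra. apply is_derive_scal. apply is_derive_ln. lra.
      - intros s hs. assert (h := Hdd s ltac:(lra)).
        assert (k * / s <= ddpsi s).
        { apply (Rmult_le_reg_r s). lra. rewrite Rmult_assoc, Rinv_l by lra. lra. }
        lra. }
    assert (Eln : ln x = ln X0 + A) by (unfold x; rewrite ln_mult, ln_exp; [ring| lra| apply exp_pos]).
    rewrite Eln in Hm.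
    assert (k * A = L - dpsi X0 + k) by (unfold A; field; lra).
    assert (hh := HL1 x ltac:(lra)). nra. }
  apply is_lim_seq_spec. intro eps. assert (heps := cond_pos eps).
  destruct (Unb (2 / eps)) as [X [hX hMX]].
  assert (hX0 : 0 < X) by (unfold x1 in *; lra).
  assert (hpX := Ppos X hX0).
  assert (Hpsi : forall x, X <= x -> 2 / eps * (x - X) <= psi x - psi X).
  { intros x hx. destruct (mvt psi dpsi X x hx) as [xi [hxi Exi]].
    { intros; apply Dpsi; lra. }
    assert (dpsi X <= dpsi xi) by (apply Hinc; lra).
    rewrite Exi. apply Rmult_le_compat_r; lra. }
  destruct (nfloor_ex (2 * X) ltac:(lra)) as [N hN].
  exists (Datatypes.S N). intros n hn. apply le_INR in hn. rewrite S_INR in hn.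
  set (y := INR n) in *.
  assert (hy : 2 * X < y) by lra.
  assert (H1 := Hpsi y ltac:(lra)).
  assert (E2 : eps * (2 / eps) = 2) by (field; lra).
  assert (H2 : 2 * (y - X) <= eps * (psi y - psi X)).
  { rewrite <- E2, Rmult_assoc. apply Rmult_le_compat_l; lra. }
  assert (hpy : 0 < psi y) by (apply Ppos; lra).
  rewrite Rminus_0_r, Rabs_right.
  - apply (Rmult_lt_reg_r (psi y)). auto. unfold Rdiv. rewrite Rmult_assoc, Rinv_l by lra. nra.
  - apply Rle_ge, Rdiv_le_0_compat; lra.
Qed.
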